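(* Let $q$ be a prime power with $q=4m+1$ such that $-1\notin D_0^4$ (i.e. $-1$ is not a fourth power in $\mathbb{F}_q$). Let $a,b$ be the two distinct square roots of $-1$ in $\mathbb{F}_q$, and let $$M=\begin{pmatrix}1&-1&a&b\\ -1&1&b&a\\ b&a&1&-1\\ a&b&-1&1\end{pmatrix}.$$ Then the $4\times 4$ block matrix whose $(i,j)$ block is $C_{M_{ij}}$ is the adjacency matrix of a directed strongly regular graph with parameters $(4(4m+1),\ 4m,\ m,\ m-1,\ m)$.
   Context: Fix a primitive element $\gamma$ of $\mathbb{F}_q$; $D_i^e=\gamma^i\langle\gamma^e\rangle$ ($e\mid q-1$) are the cyclotomic classes, here with $e=4$. For $\sigma\in\mathbb{F}_q^*$, $C_\sigma$ is the $q\times q$ $0$-$1$ matrix with rows and columns indexed by $\mathbb{F}_q$ and $(C_\sigma)_{x,y}=1$ iff $x\in\sigma y+D_0^e$. A directed strongly regular graph with parameters $(v,k,t,\lambda,\mu)$ is a digraph (no loops, no multiple arcs) on $v$ vertices whose adjacency matrix $A$ satisfies $A^2=tI+\lambda A+\mu(J-I-A)$ and $AJ=JA=kJ$. *)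

(* Defs.v *)
From HB Require Import structures.
From mathcomp Require Import all_boot all_order all_algebra all_field.
Set Implicit Arguments. Unset Strict Implicit. Unset Printing Implicit Defensive.
Import GRing.Theory.
Local Open Scope ring_scope.

(* Cyclotomic class D_i^e = gamma^i <gamma^e> in F_q^*, gamma primitive.
   Since gamma^(q-1) = 1, exponents k < q suffice. *)
Definition cyclo_class (F : finFieldType) (gamma : F) (e i : nat) : {set F} :=
  [set x : F | [exists k : 'I_#|F|, x == gamma ^+ (i + e * k)]].

Definition Cmx (F : finFieldType) (gamma : F) (e : nat) (sigma : F) (x y : F) : bool :=
  (x - sigma * y) \in cyclo_class gamma e 0.

Definition Mmat (F : finFieldType) (a b : F) (i j : 'I_4) : F :=
  nth 0 (nth [::]
    [:: [:: 1; -1; a; b];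
        [:: -1; 1; b; a];
        [:: b; a; 1; -1];
        [:: a; b; -1; 1]] i) j.

Definition block_adj (F : finFieldType) (gamma a b : F) : rel ('I_4 * F)%type :=
  fun u w => Cmx gamma 4 (Mmat a b u.1 w.1) u.2 w.2.

Definition adjmx (V : finType) (e : rel V) (x y : V) : int := (e x y : nat)%:Z.

(* Directed strongly regular graph (v,k,t,lambda,mu): digraph without loops
   whose adjacency matrix A satisfies A^2 = tI + lambda A + mu (J - I - A)
   and AJ = JA = kJ (all written entrywise). *)
Definition is_dsrg (V : finType) (e : rel V) (v k t lam mu : nat) : Prop :=
  [/\ #|V| = v,
      (forall x, ~~ e x x),
      (forall x y, \sum_(z : V) adjmx e x z * adjmx e z y =
          t%:Z * (x == y : nat)%:Z + lam%:Z * adjmx e x y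
          + mu%:Z * (1 - (x == y : nat)%:Z - adjmx e x y)),
      (forall x, \sum_(y : V) adjmx e x y = k%:Z) &
      (forall y, \sum_(x : V) adjmx e x y = k%:Z)].

(* Main.v *)
Require Import Defs.
From HB Require Import structures.
From mathcomp Require Import all_boot all_order all_algebra all_field.
From mathcomp Require Import ring zify.
Set Implicit Arguments. Unset Strict Implicit. Unset Printing Implicit Defensive.
Import GRing.Theory.
Local Open Scope ring_scope.

Lemma inD_iff (F : finFieldType) (m : nat) (gamma : F) :
  #|F| = (4 * m + 1)%N -> (#|F|.-1).-primitive_root gamma ->
  forall x, (x \in cyclo_class gamma 4 0) = (x ^+ m == 1).
Proof.
move=> HF Hp x.
have hn : #|F|.-1 = (4 * m)%N by rewrite HF addn1.
rewrite hn in Hp.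
have m0 : (0 < m)%N.
  case: m HF Hp hn => // HF Hp hn; by have := prim_order_gt0 Hp.
apply/idP/idP.
- rewrite inE => /existsP [k /eqP ->].
  by rewrite add0n -exprM mulnAC exprM (prim_expr_order Hp) expr1n.
- move=> /eqP xm.
  have : x ^+ (4 * m) = 1 by rewrite mulnC exprM xm expr1n.
  case/(prim_rootP Hp) => i xi.
  have : (4 * m %| i * m)%N by rewrite (prim_order_dvd Hp) exprM -xi xm.
  rewrite dvdn_pmul2r // => /dvdnP [k ik].
  have kF : (k < #|F|)%N.
    have := ltn_ord i; rewrite ik HF; lia.
  rewrite inE; apply/existsP; exists (Ordinal kF).
  by rewrite /= xi ik mulnC add0n.
Qed.
Lemma divr_eq1 (F : fieldType) (u v : F) : u != 0 -> (u^-1 * v == 1) = (v == u).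
Proof.
move=> u0; apply/eqP/eqP => h.
  by rewrite -(mulVKf u0 v) h mulr1.
by rewrite h mulVf.
Qed.

Lemma sqN1_neq0 (F : fieldType) (x : F) : x ^+ 2 = -1 -> x != 0.
Proof. by move=> h; apply/eqP => x0; move: h; rewrite x0 expr0n /= => /eqP; rewrite eq_sym oppr_eq0 oner_eq0. Qed.

Lemma P1 (F : finFieldType) (m : nat) (D : {set F}) (a b : F)
  (inD : forall x, (x \in D) = (x ^+ m == 1)) (m0 : (0 < m)%N)
  (h1 : (-1 : F) ^+ m = -1) (one : (1 : F) != -1) (ha : a ^+ 2 = -1) (hba : b = -a)
  (e4 : forall e : F, e != 0 -> e ^+ (4 * m) = 1) (i : 'I_4) (e : F) :
  \sum_(l < 4) ((Mmat a b i l)^-1 * e \in D : nat)%:Z = (e != 0 : nat)%:Z.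
Proof.
have [->|e0] := eqVneq e 0.
  rewrite big1 // => l _; by rewrite mulr0 inD expr0n eqn0Ngt m0 /= eq_sym oner_eq0.
set s := a ^+ m.
have s2 : s ^+ 2 = -1 by rewrite -exprM mulnC exprM ha h1.
have a0 : a != 0 by apply: sqN1_neq0.
have bm : b ^+ m = - s by rewrite hba exprNn h1 mulN1r.
have t4 : (e ^+ m) ^+ 4 = 1 by rewrite -exprM mulnC e4.
have two : (2 : F) != 0.
  apply: contra one => /eqP h2; rewrite -subr_eq0 opprK.
  by rewrite -h2.
have s0 : s != 0 by apply: sqN1_neq0.
have f1 : (1 == s) = false.
  apply/negbTE; apply: contra one => /eqP h; by rewrite -s2 -h expr1n.
have f2 : (1 == - s) = false.
  apply/negbTE; apply: contra one => /eqP h; by rewrite -s2 -sqrrN -h expr1n.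
have f3 : (-1 == s) = false.
  apply/negbTE; apply: contra one => /eqP h; by rewrite -s2 -h sqrrN expr1n.
have f4 : (-1 == - s) = false.
  apply/negbTE; apply: contra one => /eqP h; by rewrite -s2 -sqrrN -h sqrrN expr1n.
have f5 : (s == - s) = false.
  apply/negbTE; apply: contra s0 => /eqP h.
  have : s *+ 2 == 0 by rewrite mulr2n {1}h addNr.
  by rewrite -mulr_natr mulf_eq0 (negbTE two) orbF.
have g3 : (s == -1) = false by rewrite eq_sym.
have g4 : (- s == -1) = false by rewrite eq_sym.
have f6 : (1 == -1 :> F) = false by apply/negbTE.
have roots : [\/ e ^+ m = 1, e ^+ m = -1, e ^+ m = s | e ^+ m = -s].
  set t := e ^+ m.
  have : (t - 1) * (t + 1) * ((t - s) * (t + s)) == 0.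
    have -> : (t - s) * (t + s) = t ^+ 2 + 1 by rewrite -subr_sqr s2 opprK.
    have -> : (t - 1) * (t + 1) * (t ^+ 2 + 1) = t ^+ 4 - 1 by ring.
    by rewrite t4 subrr.
  rewrite !mulf_eq0 !subr_eq0 !addr_eq0.
  by move=> /orP[/orP[]|/orP[]] /eqP; [constructor 1|constructor 2|constructor 3|constructor 4].
have key : forall l, ((Mmat a b i l)^-1 * e \in D) = (e ^+ m == (Mmat a b i l) ^+ m).
  move=> l; rewrite inD exprMn exprVn divr_eq1 //.
  rewrite expf_eq0 negb_and m0 /=.
  by case: l => [[|[|[|[|l]]]] Hl]; case: i => [[|[|[|[|i]]]] Hi] //=;
     rewrite /Mmat /= ?oppr_eq0 ?oner_eq0 ?hba ?oppr_eq0.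
under eq_bigr => l _ do rewrite key.
rewrite !big_ord_recr big_ord0 /=.
clear key.
case: i => [[|[|[|[|i]]]] Hi] //=; rewrite /Mmat /= ?expr1n ?h1 -/s ?bm;
  case: roots => ->; rewrite ?eqxx ?f1 ?f2 ?f3 ?f4 ?f5 ?f6
    ?(eq_sym s) ?(eq_sym (-s)) ?(eq_sym (-1)) ?f1 ?f2 ?f3 ?f4 ?f5 ?f6 ?g3 ?g4 //.
Qed.
Lemma sumD_shift (F : finFieldType) (D : {set F}) (w : F) :
  \sum_(e : F) ((w - e \in D) : nat)%:Z = \sum_(u : F) ((u \in D) : nat)%:Z.
Proof. by rewrite [RHS](reindex_inj (inv_inj (subKr w))). Qed.

Lemma core (F : finFieldType) (D : {set F}) (M : 'I_4 -> 'I_4 -> F) (m : nat)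
 (HP1 : forall i e, \sum_(l < 4) ((M i l)^-1 * e \in D : nat)%:Z = (e != 0 : nat)%:Z)
 (HP4 : forall i l j, M i l * M l j = M i j)
 (Hnz : forall i l, M i l != 0)
 (SD : \sum_(u : F) (u \in D : nat)%:Z = m%:Z) i j x y :
 \sum_(l < 4) \sum_(z : F) ((x - M i l * z \in D) : nat)%:Z * ((z - M l j * y \in D : nat)%:Z)
   = m%:Z - ((x - M i j * y \in D : nat)%:Z).
Proof.
set w := x - M i j * y.
transitivity (\sum_(l < 4) \sum_(e : F) ((w - e \in D) : nat)%:Z * (((M i l)^-1 * e \in D) : nat)%:Z).
  apply: eq_bigr => l _.
  rewrite (reindex_inj (addIr (M l j * y))) /=.
  rewrite (reindex_inj (mulfI (invr_neq0 (Hnz i l)))) /=.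
  apply: eq_bigr => e _.
  rewrite addrK.
  have -> : x - M i l * ((M i l)^-1 * e + M l j * y) = w - e.
    by rewrite /w -(HP4 i l j) mulrDr mulVKf ?Hnz // mulrA; ring.
  by [].
rewrite exchange_big /=.
under eq_bigr => e _ do rewrite -mulr_sumr HP1.
rewrite -SD -(sumD_shift D w).
rewrite (bigD1 0) //= eqxx mulr0 add0r.
rewrite [X in _ = X - _](bigD1 0) //= subr0 addrAC subrr add0r.
by apply: eq_bigr => e ->; rewrite mulr1.
Qed.

Lemma Mprod (F : finFieldType) (a b : F) (ha : a ^+ 2 = -1) (hba : b = -a) i l j :
  Mmat a b i l * Mmat a b l j = Mmat a b i j.
Proof.
have aa : a * a = -1 by rewrite -expr2.
rewrite hba.
by case: i => [[|[|[|[|i]]]] Hi]; case: l => [[|[|[|[|l]]]] Hl];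
   case: j => [[|[|[|[|j]]]] Hj] //=; rewrite /Mmat /=;
   rewrite ?mulNr ?mulrN ?opprK ?mul1r ?mulr1 ?aa ?opprK.
Qed.

Lemma Mnz (F : finFieldType) (a b : F) (ha : a ^+ 2 = -1) (hba : b = -a) i l :
  Mmat a b i l != 0.
Proof.
have a0 : a != 0 by apply: sqN1_neq0.
rewrite hba.
by case: i => [[|[|[|[|i]]]] Hi]; case: l => [[|[|[|[|l]]]] Hl] //=; rewrite /Mmat /=
  ?oppr_eq0 ?oner_eq0.
Qed.

Theorem mainTheorem10 (F : finFieldType) (m : nat) (gamma a b : F) :
  #|F| = (4 * m + 1)%N ->
  (#|F|.-1).-primitive_root gamma ->
  (-1 : F) \notin cyclo_class gamma 4 0 ->
  a ^+ 2 = -1 -> b ^+ 2 = -1 -> a != b ->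
  is_dsrg (block_adj gamma a b) (4 * (4 * m + 1)) (4 * m) m (m - 1) m.
Proof.
move=> HF Hp Hm1 ha hb hab.
set D := cyclo_class gamma 4 0.
have inD := inD_iff HF Hp.
have m0 : (0 < m)%N.
  have := prim_order_gt0 Hp; rewrite HF addn1 /= => h; lia.
have h1 : (-1 : F) ^+ m = -1.
  move: Hm1; rewrite inD -signr_odd; case: (odd m) => /=; [by rewrite expr1 | by rewrite expr0 eqxx].
have one : (1 : F) != -1.
  by apply: contra Hm1 => /eqP h; rewrite inD -h expr1n.
have hba : b = -a.
  have : (b - a) * (b + a) == 0 by rewrite -subr_sqr ha hb subrr.
  rewrite mulf_eq0 subr_eq0 eq_sym (negbTE hab) /= addr_eq0.
  by move/eqP.
have e4 : forall e : F, e != 0 -> e ^+ (4 * m) = 1.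
  move=> e e0; have := expf_card e; rewrite HF addn1 exprSr => h.
  by apply: (mulIf e0); rewrite h mul1r.
have P1' := P1 inD m0 h1 one ha hba e4.
have SD : \sum_(u : F) ((u \in D) : nat)%:Z = m%:Z.
  have E : \sum_(e : F) \sum_(l < 4) ((Mmat a b 0 l)^-1 * e \in D : nat)%:Z
         = \sum_(e : F) (e != 0 : nat)%:Z by apply: eq_bigr => e _; exact: P1'.
  rewrite exchange_big /= in E.
  rewrite (eq_bigr (fun _ => \sum_(u : F) ((u \in D) : nat)%:Z)) in E; last first.
    move=> l _; by rewrite [RHS](reindex_inj (mulfI (invr_neq0 (Mnz ha hba 0 l)))).
  have E3 : \sum_(e : F) (e != 0 : nat)%:Z = \sum_(e : F | e != 0) (1 : int).
    by rewrite [RHS]big_mkcond; apply: eq_bigr => e _; case: (e != 0).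
  rewrite E3 !sumr_const cardC1 card_ord HF in E.
  have e1 : (4 * m + 1).-1 = (4 * m)%N by rewrite addn1.
  rewrite e1 -mulr_natr !natz in E.
  move: E; set S := \sum_(u : F) _ => E.
  lia.
have Mii : forall i, Mmat a b i i = 1 by case=> [[|[|[|[|i]]]] Hi].
split.
- by rewrite card_prod card_ord HF.
- move=> [i x]; rewrite /block_adj /Cmx /= inD Mii mul1r subrr expr0n eqn0Ngt m0 /=.
  by rewrite eq_sym oner_eq0.
- move=> [i x] [j y].
  rewrite -(pair_bigA _ (fun l z => adjmx (block_adj gamma a b) (i, x) (l, z)
                                   * adjmx (block_adj gamma a b) (l, z) (j, y))) /=.
  rewrite /adjmx /block_adj /Cmx /=.
  rewrite (core P1' (Mprod ha hba) (Mnz ha hba) SD).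
  rewrite -subzn //.
  ring.
- move=> [i x].
  rewrite -(pair_bigA _ (fun l z => adjmx (block_adj gamma a b) (i, x) (l, z))) /=.
  rewrite /adjmx /block_adj /Cmx /=.
  rewrite (eq_bigr (fun _ => m%:Z)); last first.
    move=> l _; rewrite -SD -(sumD_shift D x).
    by rewrite [RHS](reindex_inj (mulfI (Mnz ha hba i l))).
  rewrite sumr_const card_ord -mulr_natr !natz; lia.
- move=> [j y].
  rewrite -(pair_bigA _ (fun l z => adjmx (block_adj gamma a b) (l, z) (j, y))) /=.
  rewrite /adjmx /block_adj /Cmx /=.
  rewrite (eq_bigr (fun _ => m%:Z)); last first.
    move=> l _; rewrite -SD.
    by rewrite (reindex_inj (addIr (Mmat a b l j * y))) /=; apply: eq_bigr => z _; rewrite addrK.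
  rewrite sumr_const card_ord -mulr_natr !natz; lia.
Qed.
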